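(* Let $G=(V,E)$ be a locally finite, connected, infinite graph. Then $p_{\mathrm{T,E}}\le p_{\mathrm{T,V}}$. If moreover $G$ has bounded degree, then $p_{\mathrm{T,E}}=p_{\mathrm{T,V}}$.
   Context: Fix a vertex $x$ (the thresholds do not depend on $x$). Consider Bernoulli$(p)$ bond percolation on $G$ (each edge open independently with probability $p$), with expectation $\mathbb{E}_p$; $C(x)$ is the open cluster of $x$, and $|C(x)|_V$, $|C(x)|_E$ denote its numbers of vertices and edges. Define $p_{\mathrm{T,V}}=\sup\{p\ge0:\mathbb{E}_p[|C(x)|_V]<\infty\}$ and $p_{\mathrm{T,E}}=\sup\{p\ge0:\mathbb{E}_p[|C(x)|_E]<\infty\}$. *)

(* Defs.v *)
From HB Require Import structures.
From mathcomp Require Import all_boot all_order all_algebra.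
From mathcomp Require Import all_classical all_reals all_analysis.
Set Implicit Arguments. Unset Strict Implicit. Unset Printing Implicit Defensive.
Import Order.TTheory GRing.Theory Num.Theory.
Local Open Scope classical_set_scope.
Local Open Scope ring_scope.

(* A simple graph given by a vertex type V, an edge type E and the two
   endpoints src e, tgt e of each edge (edges are undirected: the labelling
   of the endpoints carries no meaning). *)
Record graph := Graph {
  vert : choiceType;
  edge : choiceType;
  src : edge -> vert;
  tgt : edge -> vert }.

Section Graphs.
Variable G : graph.
Local Notation V := (vert G).
Local Notation E := (edge G).

Definition incident (e : E) (v : V) : Prop := src e = v \/ tgt e = v.

Definition joins (e : E) (u v : V) : Prop :=
  (src e = u /\ tgt e = v) \/ (src e = v /\ tgt e = u).

Definition simple_graph : Prop :=
  (forall e : E, src e <> tgt e) /\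
  (forall e e' : E, joins e (src e') (tgt e') -> e = e').

Definition locally_finite : Prop :=
  forall v : V, finite_set [set e : E | incident e v].

Definition bounded_degree : Prop :=
  exists D : nat, forall v : V, exists s : seq E,
    (size s <= D)%N /\ forall e, incident e v -> e \in s.

Fixpoint path_in (ok : E -> Prop) (u v : V) (p : seq (E * V)) : Prop :=
  match p with
  | [::] => u = v
  | (e, w) :: p' => ok e /\ joins e u w /\ path_in ok w v p'
  end.

Definition connected_by (ok : E -> Prop) (u v : V) : Prop :=
  exists p, path_in ok u v p.

Definition connected_graph : Prop :=
  forall u v : V, connected_by (fun _ => True) u v.

Definition infinite_graph : Prop := infinite_set [set: V].

(* Percolation configuration: omega e = true iff the edge e is open. *)
Definition clusterV (omega : E -> bool) (x : V) : set V :=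
  [set y | connected_by (fun e => omega e) x y].

(* Edge set of the open cluster C(x): open edges with an endpoint
   (hence both endpoints) in C(x). *)
Definition clusterE (omega : E -> bool) (x : V) : set E :=
  [set e | omega e /\ (clusterV omega x (src e) \/ clusterV omega x (tgt e))].

Section Percolation.
Variable R : realType.

(* cardinality of a set, as an extended real (+oo if infinite) *)
Definition ecard (T : choiceType) (A : set T) : \bar R :=
  (\esum_(a in A) (1 : \bar R))%E.

(* Bernoulli(p):
   for every finite family of distinct edges the probability of any
   prescribed pattern of states is the product of p's and (1-p)'s. *)
Definition bernoulli_bond (d : measure_display) (Omega : measurableType d)
  (P : probability Omega R) (omega : Omega -> E -> bool) (p : R) : Prop :=
  (forall e : E, measurable [set w | omega w e]) /\
  (forall (s : seq E) (b : E -> bool), uniq s ->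
     P [set w | forall e, e \in s -> omega w e = b e] =
     (\prod_(e <- s) (if b e then p else 1 - p))%:E).

(* E_p[|C(x)|_V] < oo, for (every realisation of) Bernoulli(p) percolation *)
Definition finite_meanV (x : V) (p : R) : Prop :=
  forall (d : measure_display) (Omega : measurableType d)
    (P : probability Omega R) (omega : Omega -> E -> bool),
    bernoulli_bond P omega p ->
    (\int[P]_w ecard (clusterV (omega w) x) < +oo)%E.

Definition finite_meanE (x : V) (p : R) : Prop :=
  forall (d : measure_display) (Omega : measurableType d)
    (P : probability Omega R) (omega : Omega -> E -> bool),
    bernoulli_bond P omega p ->
    (\int[P]_w ecard (clusterE (omega w) x) < +oo)%E.

Definition pTV (x : V) : R :=
  sup [set p : R | 0 <= p <= 1 /\ finite_meanV x p].

Definition pTE (x : V) : R :=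
  sup [set p : R | 0 <= p <= 1 /\ finite_meanE x p].

End Percolation.
End Graphs.

(* Main.v *)
Require Import Defs.
From HB Require Import structures.
From mathcomp Require Import all_boot all_order all_algebra.
From mathcomp Require Import all_classical all_reals all_analysis.
Set Implicit Arguments. Unset Strict Implicit. Unset Printing Implicit Defensive.
Import Order.TTheory GRing.Theory Num.Theory.
Local Open Scope classical_set_scope.
Local Open Scope ring_scope.
Import HBNNSimple.
From mathcomp Require Import lra.
Lemma int_bound d (T : measurableType d) (R : realType) (P : probability T R)
  (f g : T -> \bar R) (c : R) :
  0 < c -> (forall w, (0 <= f w)%E) -> (forall w, (0 <= g w)%E) ->
  (forall w, (f w <= 1)%E \/ (f w <= c%:E * g w)%E) ->
  (\int[P]_w f w <= 1 + c%:E * \int[P]_w g w)%E.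
Proof.
move=> c0 f0 g0 fg.
rewrite (ge0_integralTE P f0) /=.
apply: ge_ereal_sup => _ [h hf <-].
set B := [set w | 1 < h w].
have mB : measurable B.
  have -> : B = h @^-1` `]1%R, +oo[.
    by apply/seteqP; split => w /=; rewrite in_itv /= andbT.
  exact: measurable_funPTI.
have hB w : (w \in B) = (1 < h w).
  by apply/idP/idP => [/set_mem //|H]; apply: mem_set.
pose h1 := mul_nnsfun h (indic_nnsfun R (measurableC mB)).
pose h2 := mul_nnsfun h (indic_nnsfun R mB).
have -> : sintegral P h = sintegral P (h1 \+ h2).
  apply: eq_sintegral => w; rewrite /= !measurable_realfun.mindicE /= in_setC hB.
  by case: (boolP (1 < h w)) => H /=; rewrite ?mulr1 ?mulr0 ?add0r ?addr0.
rewrite sintegralD; apply: leeD.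
  have mT : measurable (@setT T) by [].
  apply: (@le_trans _ _ (sintegral P (indic_nnsfun R mT))).
    apply: le_sintegral => w /=; rewrite !measurable_realfun.mindicE /= in_setC hB in_setT.
    case: (boolP (1 < h w)) => H /=; rewrite ?mulr1 ?mulr0 //.
    by rewrite leNgt.
  by rewrite /= measurable_realfun.mindicE -(funext (indicE _ _)) sintegral_indic; exact: probability_le1.
have c'0 : 0 <= c^-1 by rewrite invr_ge0 ltW.
pose k := scale_nnsfun h2 c'0.
have kg : (sintegral P k <= \int[P]_w g w)%E.
  rewrite (ge0_integralTE P g0) /=.
  apply: ereal_sup_ubound; exists k => // w.
  rewrite /k /h2 /= !measurable_realfun.mindicE /= hB.
  case: (boolP (1 < h w)) => H /=; last by rewrite mulr0 mulr0 g0.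
  rewrite mulr1.
  have hw := hf w.
  case: (fg w) => fw.
    by move: (le_trans hw fw); rewrite lee_fin leNgt H.
  move: (le_trans hw fw) (g0 w); case: (g w) => [r| |] /=; last 2 first.
  - by move=> *; rewrite leey.
  - by move=> _; rewrite leeNy_eq.
  rewrite !lee_fin => hr _.
  by rewrite ler_pdivrMl // mulrC.
have -> : sintegral P h2 = (c%:E * sintegral P k)%E.
  rewrite /k /scale_nnsfun /= sintegralrM muleA -EFinM divff ?gt_eqF // mul1e.
  done.
by rewrite lee_pmul2l.
Qed.
Section Ecard.
Variable R : realType.
Local Open Scope ereal_scope.

Lemma ecard_ge0 (T : choiceType) (A : set T) : 0 <= ecard R A.
Proof. by apply: esum_ge0. Qed.

Lemma ecard_sub (T : choiceType) (A B : set T) : A `<=` B -> ecard R A <= ecard R B.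
Proof.
move=> AB; rewrite /ecard (esum_mkcond A) (esum_mkcond B); apply: le_esum => i _.
case: ifP => H; first by rewrite (mem_set (AB _ (set_mem H))).
by case: ifP.
Qed.

Lemma ecard_setU (T : choiceType) (A B : set T) :
  ecard R (A `|` B) <= ecard R A + ecard R B.
Proof.
rewrite /ecard.
have -> : \esum_(i in A) (1 : \bar R) = \esum_(i in A `|` B) (if i \in A then 1 else 0).
  by rewrite -esum_mkcondr; congr esum; apply/seteqP; split => y /=; [move=> Ay; split=> //; left|case].
have -> : \esum_(i in B) (1 : \bar R) = \esum_(i in A `|` B) (if i \in B then 1 else 0).
  by rewrite -esum_mkcondr; congr esum; apply/seteqP; split => y /=; [move=> Ay; split=> //; right|case].
rewrite -esumD; last 2 first.
- by move=> i _; case: ifP.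
- by move=> i _; case: ifP.
apply: le_esum => i [Ai|Bi].
  by rewrite (mem_set Ai) leeDl //; case: ifP.
by rewrite (mem_set Bi) leeDr //; case: ifP.
Qed.

Lemma ecard_set1 (T : choiceType) (x : T) : ecard R [set x] = 1.
Proof. by rewrite /ecard esum_set1. Qed.

Lemma ecard_set0 (T : choiceType) : ecard R (@set0 T) = 0.
Proof. by rewrite /ecard esum_set0. Qed.

Lemma ecard_ge1 (T : choiceType) (A : set T) x : A x -> 1 <= ecard R A.
Proof. by move=> Ax; rewrite -(ecard_set1 x); apply: ecard_sub => y ->. Qed.

Lemma ecard_image (T T' : choiceType) (f : T -> T') (B : set T) :
  ecard R (f @` B) <= ecard R B.
Proof.
case: (pselect (exists x, B x)) => [[x0 Bx0]|nB]; last first.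
  have -> : f @` B = set0.
    by apply/seteqP; split => y // [x Bx _]; apply: nB; exists x.
  by rewrite ecard_set0 ecard_ge0.
have : forall y, exists x, (f @` B) y -> B x /\ f x = y.
  move=> y; case: (pselect ((f @` B) y)) => [[x Bx fx]|ny].
    by exists x.
  by exists x0.
move=> /choice [g Hg].
have inj : set_inj (f @` B) g.
  move=> y1 y2 H1 H2 e.
  by rewrite -(Hg _ (set_mem H1)).2 -(Hg _ (set_mem H2)).2 e.
rewrite /ecard -(esum_image _ _ (fun _ => 1) inj).
apply: (ecard_sub (A := g @` (f @` B))) => _ [y Hy <-].
exact: (Hg _ Hy).1.
Qed.

Lemma ecard_seq (T : choiceType) (s : seq T) :
  ecard R [set` s] <= (size s)%:R%:E.
Proof.
elim: s => [|a s IH].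
  rewrite (_ : [set` [::]] = @set0 T) ?ecard_set0 //.
  by apply/seteqP; split => y.
have -> : [set` (a :: s)] = [set a] `|` [set` s].
  apply/seteqP; split => y /=.
    by rewrite inE => /orP [/eqP ->|H]; [left|right].
  by case => [->|H]; rewrite inE ?eqxx ?H ?orbT.
apply: (le_trans (ecard_setU _ _)); rewrite ecard_set1 /= -addn1 natrD EFinD addeC.
by apply: leeD.
Qed.

End Ecard.


Section GraphPart.
Variable G : graph.
Local Notation V := (vert G).
Local Notation E := (edge G).

Lemma path_last (ok : E -> Prop) (u y : V) p :
  path_in ok u y p -> p <> [::] -> exists e, ok e /\ (src e = y \/ tgt e = y).
Proof.
elim: p u => [|[e w] p IH] u //= [oke [je pp]] _.
case: p IH pp => [|q p] IH pp.
  rewrite /= in pp; subst w.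
  exists e; split => //; case: je => [[_ ->]|[-> _]]; [right|left]; done.
exact: (IH w pp).
Qed.

Lemma CV_sub (omega : E -> bool) (x : V) :
  clusterV omega x `<=`
  [set x] `|` ((@src G) @` (Defs.clusterE omega x) `|` (@tgt G) @` (Defs.clusterE omega x)).
Proof.
move=> y [p pp]; case: p pp => [|q p] pp.
  by left; rewrite /= in pp.
have [e [oke ey]] := path_last pp (fun H : q :: p = [::] => ltac:(discriminate H)).
have CEe : Defs.clusterE omega x e.
  split => //; case: ey => H; [left|right]; rewrite H; by exists (q :: p).
right; case: ey => H; [left|right]; by exists e.
Qed.

Variable R : realType.
Local Open Scope ereal_scope.

Lemma fV_bound (omega : E -> bool) (x : V) :
  ecard R (clusterV omega x) <= 1 \/
  ecard R (clusterV omega x) <= 3%:E * ecard R (Defs.clusterE omega x).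
Proof.
have hb : ecard R (clusterV omega x) <=
   1 + (ecard R (Defs.clusterE omega x) + ecard R (Defs.clusterE omega x)).
  apply: le_trans; first exact: (ecard_sub R (@CV_sub omega x)).
  apply: (le_trans (ecard_setU R _ _)); rewrite ecard_set1 leeD2l //.
  apply: (le_trans (ecard_setU R _ _)).
  by apply: leeD; apply: ecard_image.
case: (pselect (exists e, Defs.clusterE omega x e)) => [[e Ce]|nE].
  right; have g1 := ecard_ge1 R Ce.
  move: hb g1; case: (ecard R (Defs.clusterE omega x)) => [r| |] //=.
  - rewrite -!EFinD -EFinM !lee_fin => h1 h2.
    apply: (le_trans h1); rewrite lee_fin; lra.

  - by move=> _ _; rewrite muleC gt0_mulye ?leey.
left; move: hb; have -> : Defs.clusterE omega x = set0.
  by apply/seteqP; split => e // Ce; apply: nE; exists e.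
by rewrite ecard_set0 !adde0.
Qed.

Lemma fE_bound (D : nat) (omega : E -> bool) (x : V) :
  (forall v : V, exists s : seq E, (size s <= D)%N /\ forall e, incident e v -> e \in s) ->
  ecard R (Defs.clusterE omega x) <= D%:R%:E * ecard R (clusterV omega x).
Proof.
move=> hD.
pose J := fun y : V => [set e : E | incident e y].
have sub : Defs.clusterE omega x `<=` snd @` (clusterV omega x `*`` J).
  move=> e [oe [Hs|Ht]].
  - by exists (src e, e) => //; split => //=; rewrite /J /incident /=; left.
  - by exists (tgt e, e) => //; split => //=; rewrite /J /incident /=; right.
apply: le_trans; first exact: (ecard_sub R sub).
apply: le_trans; first exact: ecard_image.
have -> : ecard R (clusterV omega x `*`` J) =
    \esum_(y in clusterV omega x) ecard R (J y).
  by rewrite /ecard esum_esum.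
apply: (@le_trans _ _ (\esum_(y in clusterV omega x) (D%:R)%:E)).
  apply: le_esum => y _.
  have [s [hs hin]] := hD y.
  apply: le_trans; first exact: (ecard_sub R (B := [set` s]) (fun e => @hin e)).
  by apply: (le_trans (ecard_seq R s)); rewrite lee_fin ler_nat.
have esc : forall n : nat, \esum_(y in clusterV omega x) (n%:R)%:E =
    ecard R (clusterV omega x) *+ n.
  elim => [|n IH]; first by rewrite esum1.
  rewrite -natr1 EFinD esumD ?IH; first by rewrite muleS addeC.
  - by move=> y _; rewrite lee_fin.
  - by [].
by rewrite esc mule_natl.
Qed.

End GraphPart.

Lemma sup_mono (R : realType) (A B : set R) :
  A `<=` B -> B `<=` [set p | 0 <= p <= 1] -> sup A <= sup B.
Proof.
move=> AB B01.
have ubB : has_ubound B by exists 1 => y /B01 /andP[].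
case: (pselect (A !=set0)) => [[a Aa]|nA].
  apply: sup_le.
  - by move=> y /AB By; exists y.
  - by exists a.
  - by split; [exists a; exact: AB|exact: ubB].
have -> : A = set0 by apply/seteqP; split => y // Ay; apply: nA; exists y.
rewrite sup0.
case: (pselect (B !=set0)) => [[b Bb]|nB].
  by apply: le_trans (ub_le_sup ubB Bb); have /andP[] := B01 _ Bb.
have -> : B = set0 by apply/seteqP; split => y // By; apply: nB; exists y.
by rewrite sup0.
Qed.

Theorem lemma2p2 (R : realType) (G : graph) (x : vert G) :
  simple_graph G -> locally_finite G -> connected_graph G -> infinite_graph G ->
  (pTE R x <= pTV R x) /\ (bounded_degree G -> pTE R x = pTV R x).
Proof.
move=> _ _ _ _.
have EV : forall p : R, finite_meanE x p -> finite_meanV x p.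
  move=> p fE d Om P om bb.
  have lt := fE d Om P om bb.
  apply: le_lt_trans.
    apply: (@int_bound _ _ R P
      (fun w => ecard R (clusterV (om w) x))
      (fun w => ecard R (Defs.clusterE (om w) x)) 3%R).
    - by [].
    - by move=> w; exact: ecard_ge0.
    - by move=> w; exact: ecard_ge0.
    - by move=> w; exact: fV_bound.
  apply: lte_add_pinfty; first exact: ltry.
  apply: lte_mul_pinfty => //.
have sV : [set p : R | 0 <= p <= 1 /\ finite_meanV x p] `<=` [set p | 0 <= p <= 1].
  by move=> p [].
split.
  apply: sup_mono => // p [h01 hE]; split => //; exact: EV.
move=> [D hD].
have VE : forall p : R, finite_meanV x p -> finite_meanE x p.
  move=> p fV d Om P om bb.
  have lt := fV d Om P om bb.
  apply: le_lt_trans.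
    apply: (@int_bound _ _ R P
      (fun w => ecard R (Defs.clusterE (om w) x))
      (fun w => ecard R (clusterV (om w) x)) (D%:R + 1)%R).
    - by rewrite ltr_wpDl.
    - by move=> w; exact: ecard_ge0.
    - by move=> w; exact: ecard_ge0.
    - move=> w; right.
      apply: le_trans; first exact: (@fE_bound G R D (om w) x hD).
      apply: lee_wpmul2r; first exact: ecard_ge0.
      by rewrite lee_fin lerDl.
  apply: lte_add_pinfty; first exact: ltry.
  apply: lte_mul_pinfty => //.
apply/eqP; rewrite eq_le; apply/andP; split.
  apply: sup_mono => // p [h01 hE]; split => //; exact: EV.
apply: sup_mono; last by move=> p [].
move=> p [h01 hV]; split => //; exact: VE.
Qed.
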